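(* Let $2\le R<K$ and $\epsilon\in(0,1)$, and let $$m=\left\lceil\frac{K(K-1)}{(K-R)(R-1)}\log\!\Big(\frac{K}{\epsilon}\Big)\right\rceil.$$ Choose $\mathcal{Y}_1,\ldots,\mathcal{Y}_m$ independently and uniformly at random among the $R$-element subsets of $[K]$. Let $Z$ be uniform on $[K]$, independent of the $\mathcal{Y}_i$, and, given $\mathcal{Y}_1,\ldots,\mathcal{Y}_m$ and $Z=k$, let $Y_1,\ldots,Y_m$ be conditionally independent with $Y_i=k$ if $k\in\mathcal{Y}_i$ and $Y_i$ uniform on $\mathcal{Y}_i$ if $k\notin\mathcal{Y}_i$. Let $g$ be the maximum-likelihood decoder $g(y)\in\arg\max_{k\in[K]}\mathcal{L}(y;k)$ with $\mathcal{L}(y;k)=\prod_{i=1}^m\mathbb{P}(Y_i=y_i\mid Z=k,\mathcal{Y}_1,\ldots,\mathcal{Y}_m)$, ties broken arbitrarily. Then $\mathbb{P}(g(Y)\ne Z)\le\epsilon$, where the probability is over the random choice of the $\mathcal{Y}_i$, of $Z$, and of $Y$.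
   Context: $[K]=\{1,\ldots,K\}$; $\log$ denotes the natural logarithm. *)

(* Defs.v *)
From HB Require Import structures.
From mathcomp Require Import all_boot all_order all_algebra.
From mathcomp Require Import reals exp.
Set Implicit Arguments. Unset Strict Implicit. Unset Printing Implicit Defensive.
Import Order.TTheory GRing.Theory Num.Theory.
Local Open Scope ring_scope.

Section Coded.
Variables (R : realType) (K r m : nat).

(* P(Y_i = y | Z = z, calY_i = S): y = z if z in S, uniform on S otherwise. *)
Definition chan (S : {set 'I_K}) (z y : 'I_K) : R :=
  if z \in S then (y == z)%:R else (y \in S)%:R / r%:R.

Definition lik (Ys : {ffun 'I_m -> {set 'I_K}}) (y : {ffun 'I_m -> 'I_K})
    (k : 'I_K) : R :=
  \prod_(i < m) chan (Ys i) k (y i).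

Definition validYs (Ys : {ffun 'I_m -> {set 'I_K}}) : bool :=
  [forall i, #|Ys i| == r].

Definition is_ML
    (g : {ffun 'I_m -> {set 'I_K}} -> {ffun 'I_m -> 'I_K} -> 'I_K) : Prop :=
  forall Ys y k, validYs Ys -> lik Ys y k <= lik Ys y (g Ys y).

Definition err_prob
    (g : {ffun 'I_m -> {set 'I_K}} -> {ffun 'I_m -> 'I_K} -> 'I_K) : R :=
  \sum_(Ys | validYs Ys) \sum_(z : 'I_K) \sum_(y : {ffun 'I_m -> 'I_K})
    ((('C(K, r))%:R)^-1 ^+ m * (K%:R)^-1 * lik Ys y z * (g Ys y != z)%:R).

End Coded.

(* Main.v *)
Require Import Defs.
From HB Require Import structures.
From mathcomp Require Import all_boot all_order all_algebra.
From mathcomp Require Import reals exp sequences.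
From mathcomp Require Import ring lra zify.
Set Implicit Arguments. Unset Strict Implicit. Unset Printing Implicit Defensive.
Import Order.TTheory GRing.Theory Num.Theory.
Local Open Scope ring_scope.

Section H.
Variables (R : realType) (K r : nat).
Hypothesis r0 : (0 < r)%N.

Lemma chan_ge0 (S : {set 'I_K}) (z y : 'I_K) : 0 <= @chan R K r S z y.
Proof. by rewrite /chan; case: ifP => _; rewrite ?divr_ge0 ?ler0n. Qed.

Definition w (S : {set 'I_K}) (z k : 'I_K) : R :=
  \sum_x @chan R K r S k x * (@chan R K r S z x != 0)%:R.

Lemma rneq0 : (r%:R : R) != 0.
Proof. by rewrite pnatr_eq0 -lt0n. Qed.

Lemma wE (S : {set 'I_K}) (z k : 'I_K) : k != z -> #|S| = r ->
  w S z k = if z \in S then (k \notin S)%:R / r%:R else 1.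
Proof.
move=> kz cS; rewrite /w; case: ifP => zS.
  rewrite (bigD1 z) //= big1 => [|x xz]; last first.
    by rewrite /chan zS (negbTE xz) eqxx mulr0.
  rewrite addr0 /chan zS eqxx oner_eq0 mulr1 eq_sym (negbTE kz).
  by case: (k \in S) => /=; rewrite ?mul0r ?mul1r.
have E x : (@chan R K r S z x != 0) = (x \in S).
  by rewrite /chan zS mulf_eq0 invr_eq0 negb_or rneq0 andbT; case: (x \in S); rewrite ?oner_eq0 ?eqxx.
under eq_bigr do rewrite E mulr_natr mulrb.
rewrite -big_mkcond /=.
have -> : \sum_(i | i \in S) @chan R K r S k i = \sum_(i in S) @chan R K r S k i by [].
case kS: (k \in S).
  rewrite (bigD1 k) //= big1 => [|x /andP[_ xk]]; last by rewrite /chan kS (negbTE xk).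
  by rewrite /chan kS eqxx addr0.
rewrite (eq_bigr (fun _ => (r%:R : R)^-1)) => [|x xS]; last by rewrite /chan kS xS mul1r.
by rewrite sumr_const cS -(mulr_natr ((r%:R : R)^-1)) mulVf // rneq0.
Qed.


Lemma cnt (B : {set 'I_K}) :
  \sum_(S : {set 'I_K} | (#|S| == r) && (S \subset B)) (1:R) = 'C(#|B|, r)%:R.
Proof.
rewrite (eq_bigr (fun _ => (1%N)%:R)) // -natr_sum sum1dep_card -cards_draws.
by congr (_%:R); apply: eq_card => S; rewrite !inE andbC.
Qed.

Lemma subC1 (S : {set 'I_K}) z : (S \subset [set~ z]) = (z \notin S).
Proof. by rewrite subsetC sub1set inE. Qed.

Hypothesis r2 : (2 <= r)%N.
Hypothesis rK : (r < K)%N.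

Lemma sumw (z k : 'I_K) : k != z ->
  \sum_(S : {set 'I_K} | #|S| == r) w S z k
  = 'C(K, r)%:R * ((K%:R - r%:R) / (K%:R - 1)).
Proof.
move=> kz.
rewrite (eq_bigr (fun S : {set 'I_K} => if z \in S then (k \notin S)%:R / r%:R else (1:R))); last first.
  by move=> S /eqP cS; rewrite wE.
rewrite (bigID (fun S : {set 'I_K} => z \in S)) /=.
rewrite (eq_bigr (fun S : {set 'I_K} => ((k \notin S)%:R : R) / r%:R)); last by move=> S /andP[_ ->].
rewrite (eq_bigr (fun S : {set 'I_K} => (1:R)) (P := fun S : {set 'I_K} => (#|S| == r) && (z \notin S))); last first.
  by move=> S /andP[_ /negbTE ->].
rewrite -mulr_suml.
have eX : \sum_(S : {set 'I_K} | (#|S| == r) && (z \in S)) ((k \notin S)%:R : R)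
   = \sum_(S : {set 'I_K} | (#|S| == r) && (S \subset [set~ k])) 1
   - \sum_(S : {set 'I_K} | (#|S| == r) && (S \subset [set~ k] :&: [set~ z])) 1.
  apply/eqP; rewrite eq_sym subr_eq; apply/eqP.
  rewrite [X in _ = _ + X]big_mkcond [X in _ = X + _]big_mkcond
          [X in X = _]big_mkcond -big_split /=.
  apply: eq_bigr => S _; rewrite subsetI !subC1.
  by case: (#|S| == r); case: (z \in S); case: (k \in S); rewrite /= ?addr0 ?add0r.
have eY : \sum_(S : {set 'I_K} | (#|S| == r) && (z \notin S)) (1 : R)
   = \sum_(S : {set 'I_K} | (#|S| == r) && (S \subset [set~ z])) 1.
  by apply: eq_bigl => S; rewrite subC1.
rewrite eX eY !cnt !cardsC1 card_ord.
have c2 : #|[set~ k] :&: [set~ z]| = K.-2.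
  have := cardsC ([set k] :|: [set z]); rewrite -setCU card_ord cards2 kz /=; lia.
rewrite c2.
have [n eK] : exists n, K = n.+2 by exists K.-2; lia.
have [s er] : exists s, r = s.+1 by exists r.-1; lia.
have sn : (s <= n)%N by lia.
rewrite eK er /= binS.
have h1 := mul_bin_diag n.+1 s.
have h2 := mul_bin_down n.+2 s.+1.
rewrite /= in h1 h2.
move: h1 h2 => /(congr1 (fun x => x%:R : R)) h1 /(congr1 (fun x => x%:R : R)) h2.
rewrite !natrM in h1 h2.
rewrite natrB in h2; last by lia.
set a := 'C(n, s)%:R in h1 *; set b := 'C(n.+1, s.+1)%:R in h1 h2 *.
set c := 'C(n.+2, s.+1)%:R in h2 *.
have e3 : b - 'C(n, s.+1)%:R = a by rewrite /b binS natrD; lra.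
rewrite e3.
have eN : (n.+2%:R : R) = n.+1%:R + 1 by rewrite -natr1.
rewrite eN in h2 *; rewrite addrK.
have hN : (0:R) < n.+1%:R by rewrite ltr0n.
have hS : (0:R) < s.+1%:R by rewrite ltr0n.
have -> : a = s.+1%:R*b/n.+1%:R by rewrite -h1; field; lra.
rewrite mulrA (mulrC c) -h2; field; lra.
Qed.
End H.

Section M.
Variables (R : realType) (K r m : nat).
Hypothesis r2 : (2 <= r)%N.
Hypothesis rK : (r < K)%N.

Definition F (S : {set 'I_K}) (z k x : 'I_K) : R :=
  @chan R K r S k x * (@chan R K r S z x != 0)%:R.

Lemma lik_ge0 Ys y k : 0 <= @lik R K r m Ys y k.
Proof. by apply: prodr_ge0 => i _; apply: chan_ge0. Qed.

Lemma pointwise g (hg : @is_ML R K r m g) Ys y z : validYs r Ys ->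
  @lik R K r m Ys y z * (g Ys y != z)%:R <=
  \sum_(k | k != z) \prod_i F (Ys i) z k (y i).
Proof.
move=> vY.
have RHS0 : 0 <= \sum_(k | k != z) \prod_i F (Ys i) z k (y i).
  apply: sumr_ge0 => k _; apply: prodr_ge0 => i _.
  by rewrite /F mulr_ge0 ?ler0n // chan_ge0.
case: eqP => [_|gz]; first by rewrite mulr0.
case: (boolP (@lik R K r m Ys y z == 0)) => [/eqP->|lz]; first by rewrite mul0r.
rewrite mulr1.
have ind : forall k, \prod_i F (Ys i) z k (y i) = @lik R K r m Ys y k.
  move=> k; rewrite /F big_split /= [X in _ * X]big1 ?mulr1 // => i _.
  case: eqP => // /eqP c0; exfalso; move: lz; apply/negP; rewrite negbK.
  by apply/prodf_eq0; exists i.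
under eq_bigr do rewrite ind.
apply: (le_trans (hg Ys y z vY)).
rewrite (bigD1 (g Ys y)) /=; last by apply/eqP.
rewrite lerDl; apply: sumr_ge0 => k _; exact: lik_ge0.
Qed.

Lemma prodw (z k : 'I_K) : k != z ->
  \sum_(Ys | validYs r Ys) \sum_(y : {ffun 'I_m -> 'I_K}) \prod_i F (Ys i) z k (y i)
  = ('C(K, r)%:R * ((K%:R - r%:R) / (K%:R - 1))) ^+ m.
Proof.
move=> kz.
have e1 : forall Ys : {ffun 'I_m -> {set 'I_K}},
   \sum_(y : {ffun 'I_m -> 'I_K}) \prod_i F (Ys i) z k (y i) = \prod_i w R r (Ys i) z k.
  move=> Ys; rewrite (bigA_distr_bigA (fun i x => F (Ys i) z k x)) //.
under eq_bigr do rewrite e1.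
rewrite (eq_bigl (fun Ys => Ys \in ffun_on (fun S : {set 'I_K} => #|S| == r))); last first.
  move=> Ys; rewrite /validYs; apply/forallP/ffun_onP => h i; exact: h.
rewrite -(bigA_distr_big (fun S : {set 'I_K} => #|S| == r) (fun (i:'I_m) (S : {set 'I_K}) => w R r S z k)) /=.
rewrite (eq_bigr (fun _ => 'C(K, r)%:R * ((K%:R - r%:R) / (K%:R - 1)))).
  by rewrite prodr_const card_ord.
move=> i _; apply: sumw => //; lia.
Qed.
End M.
Lemma final_bound (R : realType) (K r : nat) (eps : R) (m : nat)
  (hr : (2 <= r)%N) (hrK : (r < K)%N) (heps0 : 0 < eps) (heps1 : eps < 1)
  (hm : m%:Z = Num.ceil ((K%:R * (K%:R - 1)) / ((K%:R - r%:R) * (r%:R - 1))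
                          * ln (K%:R / eps))) :
  (K%:R - 1) * ((K%:R - r%:R) / (K%:R - 1)) ^+ m <= eps.
Proof.
have hK : (1 : R) < K%:R by rewrite ltr1n; lia.
have hr1 : (1 : R) < r%:R by rewrite ltr1n; lia.
have hrK' : (r%:R : R) < K%:R by rewrite ltr_nat.
set T := _ * ln _ in hm.
have mT : T <= m%:R.
  have := ceil_ge T; rewrite -hm; by [].
pose x : R := (r%:R - 1) / (K%:R - 1).
have hx0 : 0 <= x by rewrite /x divr_ge0 //; lra.
have eq : (K%:R - r%:R) / (K%:R - 1) = 1 - x :> R by rewrite /x; field; lra.
have hq0 : 0 <= 1 - x by rewrite -eq divr_ge0 //; lra.
have L0 : 0 < ln (K%:R / eps) :> R.
  apply: ln_gt0; rewrite ltr_pdivlMr //; lra.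
have xT : ln (K%:R / eps) <= x * m%:R.
  apply: (le_trans _ (ler_wpM2l hx0 mT)).
  rewrite /T /x mulrA.
  have -> : (r%:R - 1) / (K%:R - 1) * (K%:R * (K%:R - 1) / ((K%:R - r%:R) * (r%:R - 1)))
     = K%:R / (K%:R - r%:R) :> R by field; lra.
  rewrite ler_peMl //; first by lra.
  rewrite ler_pdivlMr; lra.
rewrite eq.
have h1 : (1 - x) ^+ m <= expR (- x) ^+ m.
  apply: lerXn2r; rewrite ?nnegrE ?(ltW (expR_gt0 _)) //.
  by have := expR_ge1Dx (- x); rewrite addrC.
have h2 : expR (- x) ^+ m <= eps / K%:R.
  rewrite -expRM_natr.
  have -> : eps / K%:R = expR (- ln (K%:R / eps)).
    rewrite expRN lnK ?invf_div // posrE divr_gt0 //; lra.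
  rewrite ler_expR mulNr lerN2 //.
have hK0 : (0:R) <= K%:R - 1 by lra.
apply: (le_trans (ler_wpM2l hK0 (le_trans h1 h2))).
rewrite mulrA ler_pdivrMr; last by lra.
rewrite mulrC ler_wpM2l; lra.
Qed.

Lemma arith (R : realType) (C x : R) (K m : nat) : C != 0 -> (0 < K)%N ->
  (C^-1 ^+ m / K%:R) * ((C * x) ^+ m) *+ K.-1 *+ K = (K%:R - 1) * x ^+ m.
Proof.
move=> C0 K0.
have K0' : (K%:R : R) != 0 by rewrite pnatr_eq0 -lt0n.
have K1 : (K.-1%:R : R) = K%:R - 1 by rewrite -subn1 natrB.
rewrite -mulrnA -[LHS]mulr_natr natrM K1 exprMn exprVn.
have Cm : C ^+ m != 0 by rewrite expf_neq0.
move: (x ^+ m) => y; move: (C ^+ m) Cm => c Cm.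
field. by rewrite Cm K0'.
Qed.


Theorem theorem5 (R : realType) (K r : nat) (eps : R) (m : nat)
  (hr : (2 <= r)%N) (hrK : (r < K)%N) (heps0 : 0 < eps) (heps1 : eps < 1)
  (hm : m%:Z = Num.ceil ((K%:R * (K%:R - 1)) / ((K%:R - r%:R) * (r%:R - 1))
                          * ln (K%:R / eps)))
  (g : {ffun 'I_m -> {set 'I_K}} -> {ffun 'I_m -> 'I_K} -> 'I_K)
  (hg : @is_ML R K r m g) :
  @err_prob R K r m g <= eps.
Proof.
apply: le_trans (final_bound hr hrK heps0 heps1 hm).
rewrite /err_prob.
set c0 := (('C(K, r))%:R)^-1 ^+ m * (K%:R)^-1 : R.
have c0ge : 0 <= c0 by rewrite /c0 mulr_ge0 // ?exprn_ge0 // invr_ge0 ler0n.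
set Q := ('C(K, r)%:R * ((K%:R - r%:R) / (K%:R - 1))) ^+ m : R.
apply: (@le_trans _ _ (\sum_(Ys | validYs r Ys) \sum_(z : 'I_K) \sum_(y : {ffun 'I_m -> 'I_K})
     c0 * \sum_(k | k != z) \prod_i F R r (Ys i) z k (y i))).
  apply: ler_sum => Ys vY; apply: ler_sum => z _; apply: ler_sum => y _.
  rewrite -mulrA; apply: ler_wpM2l => //; exact: pointwise.
rewrite exchange_big /=.
have ez : forall z : 'I_K, \sum_(Ys | validYs r Ys) \sum_(y : {ffun 'I_m -> 'I_K})
     c0 * \sum_(k | k != z) \prod_i F R r (Ys i) z k (y i) = c0 * Q *+ K.-1.
  move=> z.
  under eq_bigr do under eq_bigr do rewrite mulr_sumr.
  under eq_bigr do rewrite exchange_big /=.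
  rewrite exchange_big /=.
  rewrite (eq_bigr (fun _ => c0 * Q)).
    by rewrite sumr_const cardC1 card_ord.
  move=> k kz; rewrite /Q -(@prodw R K r m hr hrK z k kz) mulr_sumr; apply: eq_bigr => Ys _.
  by rewrite mulr_sumr.
rewrite (eq_bigr _ (fun z _ => ez z)) sumr_const card_ord.
rewrite /c0 /Q arith //; first by rewrite pnatr_eq0 -lt0n bin_gt0 ltnW.
by case: (K) hrK.
Qed.
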